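(* Let $n\ge 5$, $k\in\{2,\dots,n-2\}$, and let $P,Q$ be generic planar $n$-gons such that $Q$ is inscribed in $P$ and $T_k(Q)$ is inscribed in $T_k(P)$. Then $T_k^2(Q)$ is inscribed in $T_k^2(P)$, and consequently $T_k^m(Q)$ is inscribed in $T_k^m(P)$ for every $m\ge 1$.
   Context: For an $n$-gon $P=(P_i)_{i\in\mathbb Z/n}$ in the projective plane and $k\in\{2,\dots,n-2\}$, the $k$-diagonal pentagram map is $T_k(P)=P'$ with $P'_i=P_iP_{i+k}\cap P_{i+1}P_{i+k+1}$ (here $XY$ is the line through $X,Y$). For $k=2$ this is Schwartz's pentagram map. A polygon $Q$ with the same number of vertices as $P$ is inscribed in $P$ if $Q_i$ lies on the line $P_iP_{i+1}$ for all $i$. ''Generic'' means that all iterates considered are well defined. *)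

(* Defs.v *)
(* Points of the real projective plane RP^2 are represented
   by homogeneous coordinates (nonzero vectors of R^3, up to scaling).
   The line through two distinct points X,Y is (represented by) the cross
   product X x Y, and the intersection of two distinct lines is again their
   cross product.  A point X lies on the line L iff X . L = 0. *)
From mathcomp Require Import all_boot all_algebra.
From mathcomp Require Import reals.

Set Implicit Arguments.
Unset Strict Implicit.
Unset Printing Implicit Defensive.
Import GRing.Theory Num.Theory.
Local Open Scope ring_scope.

Section Proj.
Variable R : realType.

Definition hpt := (R * R * R)%type.

Definition hx (u : hpt) : R := u.1.1.
Definition hy (u : hpt) : R := u.1.2.
Definition hz (u : hpt) : R := u.2.

Definition hzero : hpt := (0, 0, 0).

Definition cross (u v : hpt) : hpt :=
  (hy u * hz v - hz u * hy v,
   hz u * hx v - hx u * hz v,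
   hx u * hy v - hy u * hx v).

Definition dot (u v : hpt) : R := hx u * hx v + hy u * hy v + hz u * hz v.

(* An n-gon is an n-periodic sequence of points, indices taken in Z/n. *)
Definition polygon := nat -> hpt.
Definition periodic (n : nat) (P : polygon) : Prop := forall i, P (i + n)%N = P i.

Definition Tk (k : nat) (P : polygon) : polygon :=
  fun i => cross (cross (P i) (P (i + k)%N)) (cross (P i.+1) (P (i + k).+1)).

Definition inscribed (Q P : polygon) : Prop :=
  forall i, dot (Q i) (cross (P i) (P i.+1)) = 0.

(* genericity: every iterate T_k^m(P) consists of well-defined points, and all
   lines P_iP_{i+1}, P_iP_{i+k} used (for inscription and for T_k) are
   well-defined (their two points are distinct).  Well-definedness of the
   vertices of T_k^(m+1)(P) (the intersection of two distinct lines) is the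
   first clause at m+1. *)
Definition generic (k : nat) (P : polygon) : Prop :=
  forall (m i : nat),
    [/\ iter m (Tk k) P i != hzero,
        cross (iter m (Tk k) P i) (iter m (Tk k) P i.+1) != hzero &
        cross (iter m (Tk k) P i) (iter m (Tk k) P (i + k)%N) != hzero].

End Proj.

(* Main.v *)
Require Import Defs.
From mathcomp Require Import all_boot all_algebra.
From mathcomp Require Import reals.
From mathcomp Require Import ring lra.
Set Implicit Arguments.
Unset Strict Implicit.
Unset Printing Implicit Defensive.
Import GRing.Theory Num.Theory.
Local Open Scope ring_scope.

Section Vec.
Variable R : realType.
Implicit Types x y z a b c d e f l m w p q r : hpt R.

Definition det3 a b c := dot a (cross b c).
Definition scl (s : R) v : hpt R := (s * hx v, s * hy v, s * hz v).
Definition lin2 (s : R) v (t : R) w : hpt R :=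
  (s * hx v + t * hx w, s * hy v + t * hy w, s * hz v + t * hz w).

Ltac vd := repeat match goal with v : hpt _ |- _ =>
  let a := fresh "a" in let b := fresh "b" in let c := fresh "c" in
  destruct v as [[a b] c] end;
  rewrite /det3 /scl /lin2 /dot /cross /hzero /hx /hy /hz /=.

Lemma cross_lin x l m : cross x (cross l m) = lin2 (dot x m) l (- dot x l) m.
Proof. vd; congr (_,_,_); ring. Qed.
Lemma lin2_00 l m : lin2 0 l (- 0) m = hzero R.
Proof. vd; congr (_,_,_); ring. Qed.
Lemma lin2_0l l m s : lin2 0 l s m = scl s m.
Proof. vd; congr (_,_,_); ring. Qed.
Lemma lin2_0r l m s : lin2 s l (- 0) m = scl s l.
Proof. vd; congr (_,_,_); ring. Qed.
Lemma dotC x y : dot x y = dot y x.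
Proof. vd; ring. Qed.
Lemma dot_scl x y s : dot x (scl s y) = s * dot x y.
Proof. vd; ring. Qed.
Lemma scl0 y : scl 0 y = hzero R.
Proof. vd; congr (_,_,_); ring. Qed.
Lemma cross0 x : cross x (hzero R) = hzero R.
Proof. vd; congr (_,_,_); ring. Qed.
Lemma crossxx x : cross x x = hzero R.
Proof. vd; congr (_,_,_); ring. Qed.
Lemma cross_scl2 x y s t : cross (scl s x) (scl t y) = scl (s * t) (cross x y).
Proof. vd; congr (_,_,_); ring. Qed.
Lemma cross_sclr x y t : cross x (scl t y) = scl t (cross x y).
Proof. vd; congr (_,_,_); ring. Qed.
Lemma cross_scll x y t : cross (scl t x) y = scl t (cross x y).
Proof. vd; congr (_,_,_); ring. Qed.
Lemma crossC x y : cross y x = scl (-1) (cross x y).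
Proof. vd; congr (_,_,_); ring. Qed.
Lemma det3_scl1 x y z s : det3 (scl s x) y z = s * det3 x y z.
Proof. vd; ring. Qed.
Lemma det3_scl2 x y z s : det3 x (scl s y) z = s * det3 x y z.
Proof. vd; ring. Qed.
Lemma det3_scl3 x y z s : det3 x y (scl s z) = s * det3 x y z.
Proof. vd; ring. Qed.
Lemma det3_swap23 x y z : det3 x z y = - det3 x y z.
Proof. vd; ring. Qed.
Lemma dot_cross_l x y : dot (cross x y) x = 0.
Proof. vd; ring. Qed.
Lemma dot_cross_r x y : dot (cross x y) y = 0.
Proof. vd; ring. Qed.
Lemma dot_cross3 x y z : dot (cross x y) z = det3 x y z.
Proof. vd; ring. Qed.
Lemma crosscross x y z : cross (cross x y) (cross y z) = scl (det3 x y z) y.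
Proof. vd; congr (_,_,_); ring. Qed.
Lemma det3_perm x y z : det3 y z x = det3 x y z.
Proof. vd; ring. Qed.
Lemma perp3_id x y z c : det3 x y z * dot c c =
  dot x c * det3 c y z + dot y c * det3 c z x + dot z c * det3 c x y.
Proof. vd; ring. Qed.
Lemma desid p1 p2 p3 q1 q2 q3 :
  det3 (cross (cross p1 p2) (cross q1 q2)) (cross (cross p2 p3) (cross q2 q3))
       (cross (cross p1 p3) (cross q1 q3))
  = det3 p1 p2 p3 * det3 q1 q2 q3 * det3 (cross p1 q1) (cross p2 q2) (cross p3 q3).
Proof. vd; ring. Qed.

Lemma scl_nz s y : scl s y != hzero R -> s != 0.
Proof. by apply: contra => /eqP ->; rewrite scl0. Qed.

Lemma dot_nz v : v != hzero R -> dot v v != 0.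
Proof.
case: v => [[a b] c]; rewrite /dot /hx /hy /hz /=; apply: contra => /eqP h.
have ha : a = 0 by nra. have hb : b = 0 by nra. have hc : c = 0 by nra.
by rewrite ha hb hc.
Qed.

Lemma surj x : x = (hx x, hy x, hz x).
Proof. by case: x => [[]]. Qed.

Lemma par x w : cross x w = hzero R -> w != hzero R -> exists s, x = scl s w.
Proof.
move=> h wn; have nz := dot_nz wn.
have := cross_lin w x w; rewrite -[cross x w]/(cross x w) h cross0.
rewrite /lin2 /hzero => -[h1 h2 h3].
exists (dot w x / dot w w); rewrite [LHS]surj /scl; congr (_,_,_).
- apply: (mulIf nz); rewrite [RHS]mulrAC divfK //; lra.
- apply: (mulIf nz); rewrite [RHS]mulrAC divfK //; lra.
- apply: (mulIf nz); rewrite [RHS]mulrAC divfK //; lra.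
Qed.


Lemma colA b f a c d : det3 (cross b f) (cross a c) (cross b d) = det3 b d f * det3 a c b.
Proof. vd; ring. Qed.
Lemma idB y x w z : det3 (cross y x) w (cross y z) = - (det3 y x z * dot w y).
Proof. vd; ring. Qed.
Lemma colP q1 q2 q3 p1 p2 p3 r1 r2 r3 :
  det3 (cross (cross q1 q2) (cross q2 q3)) (cross (cross p1 p2) (cross p2 p3))
       (cross (cross r1 r2) (cross r2 r3))
  = det3 q1 q2 q3 * det3 p1 p2 p3 * det3 r1 r2 r3 * det3 q2 p2 r2.
Proof. vd; ring. Qed.
Lemma det3_yy x y : det3 x y y = 0.
Proof. vd; ring. Qed.
Lemma scl_h0 s : scl s (hzero R) = hzero R.
Proof. vd; congr (_,_,_); ring. Qed.
Lemma cross0l x : cross (hzero R) x = hzero R.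
Proof. vd; congr (_,_,_); ring. Qed.
Lemma sclA s t x : scl s (scl t x) = scl (s * t) x.
Proof. vd; congr (_,_,_); ring. Qed.
Lemma neg_cross_id X1 X2 X3 X4 a b c d :
  det3 (cross X2 X4) (cross X1 X3) (cross (cross b a) (cross d c)) =
  - det3 (cross X1 X3) (cross X2 X4) (cross (cross a b) (cross c d)).
Proof. vd; ring. Qed.
Lemma neg_cross_id2 X1 X2 X3 X4 a b c d :
  det3 (cross X3 X1) (cross X4 X2) (cross (cross c d) (cross a b)) =
  - det3 (cross X1 X3) (cross X2 X4) (cross (cross a b) (cross c d)).
Proof. vd; ring. Qed.
Lemma col_swap e f a b c d :
  det3 (cross e f) (cross b d) (cross a c) = - det3 (cross e f) (cross a c) (cross b d).
Proof. vd; ring. Qed.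
Lemma col_swap2 e f a b c d :
  det3 (cross f e) (cross c a) (cross d b) = - det3 (cross e f) (cross a c) (cross b d).
Proof. vd; ring. Qed.
Lemma det3_yx x y : det3 x y (cross x y) = dot (cross x y) (cross x y).
Proof. vd; ring. Qed.

Lemma mul0_l (s t : R) : s * t = 0 -> s != 0 -> t = 0.
Proof. by move/eqP; rewrite mulf_eq0 => /orP[/eqP->|/eqP ->]; rewrite ?eqxx. Qed.

Lemma perp2_par x l m : dot x l = 0 -> dot x m = 0 -> cross l m != hzero R ->
  exists s, x = scl s (cross l m).
Proof. move=> h1 h2 nz; apply: par => //; by rewrite cross_lin h1 h2 lin2_00. Qed.

Lemma perp3 x y z c : dot x c = 0 -> dot y c = 0 -> dot z c = 0 -> c != hzero R ->
  det3 x y z = 0.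
Proof.
move=> h1 h2 h3 nz; have := perp3_id x y z c; rewrite h1 h2 h3 !mul0r !addr0.
by rewrite mulrC => h; exact: mul0_l h (dot_nz nz).
Qed.

Lemma cross_nzl x y : cross x y != hzero R -> x != hzero R.
Proof. by apply: contra => /eqP ->; rewrite cross0l. Qed.
Lemma cross_nzr x y : cross x y != hzero R -> y != hzero R.
Proof. by apply: contra => /eqP ->; rewrite cross0. Qed.
Lemma crossC0 x y : cross x y = hzero R -> cross y x = hzero R.
Proof. by move=> h; rewrite crossC h scl_h0. Qed.
Lemma crossCnz x y : cross x y != hzero R -> cross y x != hzero R.
Proof. by apply: contra => /eqP /crossC0 ->. Qed.


Definition hypsD X1 X2 X3 X4 a b c d e f :=
  [/\ [/\ dot X1 a = 0, dot X1 e = 0, dot X2 b = 0, dot X2 e = 0 & dot X3 c = 0],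
      [/\ dot X3 f = 0, dot X4 d = 0 & dot X4 f = 0],
      [/\ cross X1 X2 != hzero R, cross X3 X4 != hzero R, cross a b != hzero R,
          cross c d != hzero R & e != hzero R] &
      [/\ f != hzero R & det3 (cross e f) (cross a c) (cross b d) = 0]].

Definition GG X1 X2 X3 X4 a b c d :=
  det3 (cross X1 X3) (cross X2 X4) (cross (cross a b) (cross c d)).

Lemma degA X1 X2 X3 X4 a b c d e f :
  hypsD X1 X2 X3 X4 a b c d e f ->
  cross X1 (cross a b) = hzero R -> GG X1 X2 X3 X4 a b c d = 0.
Proof.
move=> [[h1a h1e h2b h2e h3c] [h3f h4d h4f] [n12 n34 nab ncd ne] [nf col]] p1.
have [k1 eX1] := par p1 nab.
have k1n : k1 != 0.
  by apply: (@scl_nz _ (cross a b)); rewrite -eX1; exact: cross_nzl n12.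
have ye : dot (cross a b) e = 0.
  by move: h1e; rewrite eX1 dotC dot_scl dotC => /mul0_l; apply.
have nb : b != hzero R := cross_nzr nab.
have eb : cross e b = hzero R.
  apply/eqP; apply/negPn/negP => neb.
  have [s2 e2] := perp2_par h2e h2b neb.
  have [s3 e3] := perp2_par ye (dot_cross_r a b) neb.
  move: n12; rewrite eX1 e3 e2 sclA cross_scl2 crossxx scl_h0.
  by rewrite eqxx.
have [be eE] := par eb nb.
have ben : be != 0 by apply: (@scl_nz _ b); rewrite -eE.
move: col; rewrite eE cross_scll det3_scl1 colA => /mul0_l /(_ ben) /eqP.
rewrite /GG eX1 cross_scll det3_scl1 idB dot_cross3.
rewrite mulf_eq0 => /orP [/eqP hbdf | /eqP hacb].
- case: (eqVneq (cross d f) (hzero R)) => [df | ndf].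
  + have [r dE] := par df nf.
    have h3d : dot X3 d = 0 by rewrite dE dot_scl h3f mulr0.
    have [sg X3E] := perp2_par h3c h3d ncd.
    by rewrite X3E det3_scl2 det3_yy !(mulr0, mul0r, oppr0).
  + have [nu X4E] := perp2_par h4d h4f ndf.
    have h4b : dot X4 b = 0 by rewrite X4E dotC dot_scl dotC dot_cross3 det3_perm hbdf mulr0.
    have := perp3 h2b h4b (dot_cross_r a b) nb.
    by move=> ->; rewrite !(mulr0, mul0r, oppr0).
- have yc : dot (cross a b) c = 0 by rewrite dot_cross3 -[det3 a b c]opprK -det3_swap23 hacb oppr0.
  have := perp3 yc h3c (dot_cross_l c d) (cross_nzl ncd).
  by move=> ->; rewrite !(mulr0, mul0r, oppr0).
Qed.


Lemma degB X1 X2 X3 X4 a b c d e f :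
  hypsD X1 X2 X3 X4 a b c d e f ->
  cross X2 (cross a b) = hzero R -> GG X1 X2 X3 X4 a b c d = 0.
Proof.
move=> [[h1a h1e h2b h2e h3c] [h3f h4d h4f] [n12 n34 nab ncd ne] [nf col]] p2.
have := @degA X2 X1 X4 X3 b a d c e f.
rewrite /GG neg_cross_id => H.
apply/eqP; rewrite -oppr_eq0; apply/eqP; apply: H.
  split; split => //; try exact: crossCnz.
  by rewrite col_swap col oppr0.
by rewrite (crossC a b) cross_sclr p2 scl_h0.
Qed.

Lemma half X1 X2 X3 X4 a b c d e f :
  hypsD X1 X2 X3 X4 a b c d e f ->
  det3 X1 X2 (cross a b) = 0 -> GG X1 X2 X3 X4 a b c d = 0.
Proof.
move=> H; move: (H) => [[h1a h1e h2b h2e h3c] [h3f h4d h4f] [n12 n34 nab ncd ne] [nf col]] dz.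
have [lam eE] : exists lam, e = scl lam (cross X1 X2).
  by apply: perp2_par => //; rewrite dotC.
have ye : dot (cross a b) e = 0.
  by rewrite eE dot_scl dotC dot_cross3 dz mulr0.
case: (eqVneq (cross e a) (hzero R)) => [ea | nea].
- have neb : cross e b != hzero R.
    apply/negP => /eqP eb.
    have [sa aE] := par (crossC0 ea) ne.
    have [sb bE] := par (crossC0 eb) ne.
    by move: nab; rewrite aE bE cross_scl2 crossxx scl_h0 eqxx.
  have [s2 e2] := perp2_par h2e h2b neb.
  have [s3 e3] := perp2_par ye (dot_cross_r a b) neb.
  apply: (degB H).
  by rewrite e3 e2 cross_scl2 crossxx scl_h0.
- have [s1 e1] := perp2_par h1e h1a nea.
  have [s3 e3] := perp2_par ye (dot_cross_l a b) nea.
  apply: (degA H).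
  by rewrite e3 e1 cross_scl2 crossxx scl_h0.
Qed.

Lemma desarg X1 X2 X3 X4 a b c d e f :
  hypsD X1 X2 X3 X4 a b c d e f -> GG X1 X2 X3 X4 a b c d = 0.
Proof.
move=> H; move: (H) => [[h1a h1e h2b h2e h3c] [h3f h4d h4f] [n12 n34 nab ncd ne] [nf col]].
case: (eqVneq (det3 X1 X2 (cross a b)) 0) => [z1 | nz1]; first exact: half H z1.
case: (eqVneq (det3 X3 X4 (cross c d)) 0) => [z2 | nz2].
  have := @half X3 X4 X1 X2 c d a b f e.
  rewrite /GG neg_cross_id2 => H2.
  apply/eqP; rewrite -oppr_eq0; apply/eqP; apply: H2 z2.
  by split; split => //; rewrite col_swap2 col oppr0.
have [lam eE] : exists lam, e = scl lam (cross X1 X2).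
  by apply: perp2_par => //; rewrite dotC.
have [mu fE] : exists mu, f = scl mu (cross X3 X4).
  by apply: perp2_par => //; rewrite dotC.
have ln : lam != 0 by apply: (@scl_nz _ (cross X1 X2)); rewrite -eE.
have mn : mu != 0 by apply: (@scl_nz _ (cross X3 X4)); rewrite -fE.
move: col; rewrite eE fE cross_scl2 det3_scl1 => /mul0_l /(_ (mulf_neq0 ln mn)) col.
have := desid X1 X2 (cross a b) X3 X4 (cross c d).
rewrite (cross_lin X2 a b) (cross_lin X1 a b) (cross_lin X4 c d) (cross_lin X3 c d).
rewrite h2b h1a h4d h3c lin2_0l lin2_0r lin2_0l lin2_0r.
rewrite !cross_scl2 det3_scl2 det3_scl3 col_swap col oppr0 !mulr0.
move=> /esym /eqP; rewrite !mulf_eq0 (negbTE nz1) (negbTE nz2) /=.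
by move/eqP.
Qed.


Definition Dl k (P : polygon R) j := cross (P j) (P (j + k)%N).
Lemma TkE k (P : polygon R) j : Tk k P j = cross (Dl k P j) (Dl k P j.+1).
Proof. by rewrite /Tk /Dl addSn. Qed.
Lemma TkD k (P : polygon R) i :
  Tk k P i = cross (cross (P i) (P (i + k)%N)) (cross (P i.+1) (P (i + k).+1)).
Proof. by []. Qed.

Lemma step k (P Q : polygon R) : generic k P -> generic k Q -> inscribed Q P ->
  inscribed (Tk k Q) (Tk k P) -> inscribed (Tk k (Tk k Q)) (Tk k (Tk k P)).
Proof.
move=> gP gQ iQP iT i.
have hyp j : dot (Tk k Q j) (Dl k P j.+1) = 0.
  have [_ g2 _] := gP 1%N j; rewrite /= in g2.
  move: g2 (iT j); rewrite (TkE k P j) (TkE k P j.+1) crosscross dot_scl.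
  by move=> /scl_nz nz /mul0_l; apply.
have [_ g2 _] := gP 2%N i; rewrite /= in g2.
rewrite (TkE k (Tk k P) i) (TkE k (Tk k P) i.+1) crosscross dot_scl.
suff -> : dot (Tk k (Tk k Q) i) (Dl k (Tk k P) i.+1) = 0 by rewrite mulr0.
rewrite /Dl addSn (TkD k (Tk k Q) i) dot_cross3.
rewrite (TkE k P i.+1) (TkE k P (i + k).+1).
have := @desarg (Tk k Q i) (Tk k Q i.+1) (Tk k Q (i + k)) (Tk k Q (i + k).+1)
  (Dl k P i.+1) (Dl k P i.+2) (Dl k P (i + k).+1) (Dl k P (i + k).+2)
  (Dl k Q i.+1) (Dl k Q (i + k).+1).
rewrite /GG => -> //.
have [_ q1 _] := gQ 1%N i; rewrite /= in q1.
have [_ q2 _] := gQ 1%N (i + k)%N; rewrite /= in q2.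
have [p1 _ _] := gP 1%N i.+1; rewrite /= TkE in p1.
have [p2 _ _] := gP 1%N (i + k).+1; rewrite /= TkE in p2.
have [_ _ q3] := gQ 0%N i.+1; rewrite /= in q3.
have [_ _ q4] := gQ 0%N (i + k).+1; rewrite /= in q4.
split; split => //; try exact: hyp.
- by rewrite (TkE k Q i) dot_cross_r.
- by rewrite (TkE k Q i.+1) dot_cross_l.
- by rewrite (TkE k Q (i + k)) dot_cross_r.
- by rewrite (TkE k Q (i + k).+1) dot_cross_l.
- rewrite /Dl !addSn colP.
  have -> : det3 (Q (i + k).+1) (P (i + k).+1) (P (i + k).+2) = 0 by exact: iQP.
  by rewrite mulr0.
Qed.

Lemma generic_iter k (P : polygon R) (mm : nat) : generic k P -> generic k (iter mm (Tk k) P).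
Proof. by move=> gP m' j; rewrite -iterD; exact: gP. Qed.

End Vec.

Theorem theorem6 (R : realType) (n k : nat) (P Q : polygon R) :
  (5 <= n)%N -> (2 <= k)%N -> (k <= n - 2)%N ->
  periodic n P -> periodic n Q ->
  generic k P -> generic k Q ->
  inscribed Q P -> inscribed (Tk k Q) (Tk k P) ->
  inscribed (iter 2 (Tk k) Q) (iter 2 (Tk k) P) /\
  (forall m : nat, (1 <= m)%N -> inscribed (iter m (Tk k) Q) (iter m (Tk k) P)).
Proof.
move=> _ _ _ _ _ gP gQ i0 i1.
have S m : inscribed (iter m (Tk k) Q) (iter m (Tk k) P) /\
           inscribed (iter m.+1 (Tk k) Q) (iter m.+1 (Tk k) P).
  elim: m => [|m [h0 h1]]; first by split.
  split => //; apply: step => //; exact: generic_iter.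
split; first exact: (S 1%N).2.
by case=> [//|m] _; exact: (S m).2.
Qed.
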